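(* For all $i,j\in[K]$ and $0<\epsilon<2$, $$\eta_{i,j}(\epsilon)\le \log\Big(\frac{2}{\epsilon}\Big)+1+\log\big(1+D_{f_1}(\mathrm{P}_i\Vert \mathrm{P}_j)\big).$$ Furthermore, if $\epsilon\le 1$, then $$\eta_{i,j}(\epsilon)\le 2\log\Big(\frac{2}{\epsilon}\Big)\Big[1+\log\big(1+D_{f_1}(\mathrm{P}_i\Vert \mathrm{P}_j)\big)\Big].$$
   Context: Setting: $\mathcal{G}$ is a causal directed acyclic graph viewed as a Bayesian network (the joint law factorizes as the product over nodes $X$ of $\mathrm{P}(X\mid pa(X))$). $V$ is a node with parent set $pa(V)$; $V$ and $pa(V)$ take values in finite sets. There are $K$ arms indexed by $[K]=\{0,\dots,K-1\}$: under arm $k$ the conditional law of $V$ given $pa(V)$ is a known conditional distribution $\mathrm{P}_k(V\mid pa(V))$ while all other conditionals (hence the marginal law of $pa(V)$) are unchanged; these conditionals are mutually absolutely continuous. $\mathbb{P}_k,\mathbb{E}_k$ denote probability/expectation under the joint law induced by arm $k$. Logarithms are natural. Conditional $f$-divergence: for a convex $f\ge 0$ with $f(1)=0$, $D_f(\mathrm{P}_i\Vert\mathrm{P}_j)=\mathbb{E}_j\big[f\big(\mathrm{P}_i(V\mid pa(V))/\mathrm{P}_j(V\mid pa(V))\big)\big]$. Here $f_1(x)=x\exp(x-1)-1$. For $0<\epsilon<2$: $\eta_{i,j}(\epsilon)=\min\{\eta\in\mathbb{R}:\ \mathbb{P}_i(\mathrm{P}_i(V\mid pa(V))/\mathrm{P}_j(V\mid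 pa(V))>\eta)\le \epsilon/2\}$. *)

(* Defs.v *)
From mathcomp Require Import all_boot all_order all_algebra.
From mathcomp Require Import all_classical all_reals.
From mathcomp Require Import sequences exp.

Set Implicit Arguments.
Unset Strict Implicit.
Unset Printing Implicit Defensive.
Import Order.TTheory GRing.Theory Num.Theory.
Local Open Scope ring_scope.
Local Open Scope classical_set_scope.

(* Finite setting: [Pa] = values of pa(V), [Vt] = values of V.
   [q] = marginal law of pa(V) (the same under every arm).
   [P k p v] = P_k(V = v | pa(V) = p). *)

Section Defs.
Variables (R : realType) (Pa Vt : finType) (K : nat).
Variables (q : Pa -> R) (P : 'I_K -> Pa -> Vt -> R).

Definition lratio (i j : 'I_K) (p : Pa) (v : Vt) : R := P i p v / P j p v.

Definition expect (k : 'I_K) (g : Pa -> Vt -> R) : R :=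
  \sum_(p : Pa) \sum_(v : Vt) q p * P k p v * g p v.

Definition prob (k : 'I_K) (E : Pa -> Vt -> bool) : R :=
  expect k (fun p v => if E p v then 1 else 0).

Definition f1 (x : R) : R := x * expR (x - 1) - 1.

Definition cond_fdiv (f : R -> R) (i j : 'I_K) : R :=
  expect j (fun p v => f (lratio i j p v)).

(* eta_{i,j}(eps) = min { eta : P_i(P_i/P_j > eta) <= eps/2 }
   (the minimum exists; it coincides with the infimum) *)
Definition eta (i j : 'I_K) (eps : R) : R :=
  inf [set e : R | prob i (fun p v => e < lratio i j p v) <= eps / 2].

End Defs.

(* Main.v *)
Require Import Defs.
From mathcomp Require Import all_boot all_order all_algebra.
From mathcomp Require Import all_classical all_reals.
From mathcomp Require Import sequences exp.
From mathcomp Require Import topology normedtype.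
From mathcomp Require Import ring lra zify.
Import Order.TTheory GRing.Theory Num.Theory.
Local Open Scope ring_scope.

Section E.
Variable R : realType.

Lemma partial_e n : (6 <= n)%N ->
  \sum_(0 <= k < n) (1 / (k`!%:R : R)) + 2 / (n`!%:R) <= 272 / 100.
Proof.
elim: n => [//|n IH].
rewrite leq_eqVlt => /orP[/eqP <-|].
  rewrite !big_nat_recr //= big_nil.
  rewrite !factS /= !fact0. rewrite !natrM. lra.
rewrite ltnS => hn6; have {}IH := IH hn6.
rewrite big_nat_recr //=.
apply: le_trans IH.
rewrite -addrA lerD2l factS natrM.
have h : (0 : R) < n`!%:R by rewrite ltr0n fact_gt0.
have hn : (1 : R) <= n.+1%:R by rewrite ler1n.

have -> : 2 / (n.+1%:R * n`!%:R) = (2 / n.+1%:R) * (1 / (n`!%:R : R)) by rewrite mulrA mulr1 invfM mulrA.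
have -> : 2 / (n`!%:R : R) = 2 * (1 / n`!%:R) by rewrite mul1r.
have h1 : 0 < 1 / (n`!%:R : R) by rewrite divr_gt0.
have : 2 / n.+1%:R <= (1 : R).
  rewrite ler_pdivrMr ?mul1r ?ltr0n // (ler_nat R 2 n.+1). lia.
move=> H; set a := 1 / _ in h1 *; set b := 2 / _ in H *. nra.
Qed.

Lemma e_le : expR (1 : R) <= 272 / 100.
Proof.
rewrite /expR.
apply: limr_le; first exact: is_cvg_series_exp_coeff.
near=> n.
have hn : (6 <= n)%N by near: n; exists 6%N.
apply: (@le_trans _ _ (\sum_(0 <= k < n) (1 / (k`!%:R : R)) + 2 / (n`!%:R))); last exact: partial_e hn.
rewrite /series /= -[X in X <= _]addr0 lerD //.
  apply: ler_sum => k _; rewrite /exp_coeff /= expr1n. done.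
by rewrite divr_ge0 // ler0n.
Unshelve. all: by end_near.
Qed.
End E.

Lemma ln2_ge (R : realType) : 17 / 25 <= ln (2 : R).
Proof.
have e0 := expR_gt0 (1 : R).
have he := e_le R.
have h17 : expR (17 : R) <= 2 ^+ 25.
  rewrite -[17 : R]mulr1 expRM_natl.
  set y := expR 1 in e0 he *.
  have -> : y = 2 * (y / 2) by field.
  set z := y / 2.
  have z0 : 0 < z by rewrite divr_gt0.
  have hz : z <= 136 / 100 by rewrite /z; lra.
  rewrite exprMn.
  have -> : (2 : R) ^+ 25 = 2 ^+ 17 * 2 ^+ 8 by rewrite -exprD.
  rewrite ler_pM2l ?exprn_gt0 //.
  have z2 : z ^+ 2 <= 185 / 100 by rewrite expr2; nra.
  have z4 : z ^+ 4 <= 343 / 100.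
    have -> : z ^+ 4 = z ^+ 2 * z ^+ 2 by rewrite -exprD.
    have : 0 <= z ^+ 2 by rewrite exprn_ge0 // ltW.
    nra.
  have z8 : z ^+ 8 <= 1177 / 100.
    have -> : z ^+ 8 = z ^+ 4 * z ^+ 4 by rewrite -exprD.
    have : 0 <= z ^+ 4 by rewrite exprn_ge0 // ltW.
    nra.
  have z16 : z ^+ 16 <= 1386 / 10.
    have -> : z ^+ 16 = z ^+ 8 * z ^+ 8 by rewrite -exprD.
    have : 0 <= z ^+ 8 by rewrite exprn_ge0 // ltW.
    nra.
  have -> : z ^+ 17 = z ^+ 16 * z by rewrite exprSr.
  have : 0 <= z ^+ 16 by rewrite exprn_ge0 // ltW.
  have -> : (2 : R) ^+ 8 = 256 by rewrite !exprS expr0; lra.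
  nra.
have h2 : expR (17 / 25 : R) <= 2.
  have h0 : 0 <= expR (17 / 25 : R) by exact: expR_ge0.
  rewrite -(@ler_pXn2r _ 25) ?nnegrE //.
  by rewrite -expRM_natl; have -> : (25%:R * (17 / 25) : R) = 17 by lra.
rewrite -ler_expR lnK //; rewrite posrE; lra.
Qed.

Lemma key (R : realType) (u M : R) : 2 <= u -> 0 <= M ->
  expR M < u / expR 1 * expR (2 * ln u * M) + expR (-(1/2)) * (5/4 - 3/(2*u)).
Proof.
move=> hu hM.
have he := e_le R.
have e0 := expR_gt0 (1 : R).
set e := expR 1 in he e0 *.
set h := expR (-(1/2)) .
have h0 : 0 < h by exact: expR_gt0.
have he1 : h ^+ 2 * e = 1.
  rewrite /h /e expr2 -!expRD; have -> : (-(1/2) - 1/2 + 1 : R) = 0 by lra.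
  exact: expR0.
have hh : 25 / 68 <= h ^+ 2.
  have : h ^+ 2 * e <= h ^+ 2 * (272/100) by rewrite ler_pM2l ?exprn_gt0.
  rewrite he1; lra.
have hL : 17 / 25 <= ln u.
  apply: le_trans (ln2_ge R) _.
  by rewrite ler_ln ?posrE //; lra.
set L := ln u in hL *.
set E := expR M.
have E0 : 0 < E by exact: expR_gt0.
have hG : expR (2 * L * M) >= E * (1 + (2 * L - 1) * M).
  have -> : 2 * L * M = M + (2 * L - 1) * M by ring.
  rewrite expRD ler_pM2l //; exact: expR_ge1Dx.
have hEm : E * expR (- M) = 1 by rewrite /E expRxMexpNx_1.
have hEm2 : 1 - M <= expR (- M) by have := expR_ge1Dx (- M); lra.
have ha : u / e = u * h ^+ 2.
  by apply: (mulIf (lt0r_neq0 e0)); rewrite divfK ?lt0r_neq0 // -mulrA he1 mulr1.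
rewrite ha.
have hC : h / 2 <= h * (5/4 - 3/(2*u)).
  rewrite ler_pM2l //. 
  have : 3 / (2 * u) <= 3/4.
    by rewrite ler_pdivrMr ?mulr_gt0 //; lra.
  lra.
set a := u * h ^+ 2 in ha *.
have aG : a * expR (2 * L * M) >= a * (E * (1 + (2 * L - 1) * M)).
  by rewrite ler_wpM2l // /a mulr_ge0 // ?exprn_ge0 //; lra.
have kM : 0 <= (2 * L - 1) * M by rewrite mulr_ge0 //; lra.
have a2 : 2 * h ^+ 2 <= a by rewrite /a ler_pM2r ?exprn_gt0.
have h6 : 3/5 < h.
  rewrite ltNge; apply/negP => H; move: hh; rewrite expr2 => hh.
  have : h * h <= 3/5 * h by rewrite ler_pM2r.
  lra.
have hb : 1 - 2 * h ^+ 2 < h / 2 by lra.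
have ak : 1 <= a * (2 * L).
  have : e <= u * (2 * L) by nra.
  move=> H; rewrite /a -mulrA [h ^+ 2 * _]mulrC mulrA.
  have : e * h ^+ 2 <= u * (2 * L) * h ^+ 2 by rewrite ler_pM2r ?exprn_gt0.
  by rewrite mulrC he1.
have [a1|a1] := leP 1 a.
  have t1 : 0 <= E * (a - 1) by rewrite mulr_ge0 // ?subr_ge0 // ltW.
  have t2 : 0 <= a * E * ((2 * L - 1) * M).
    apply: mulr_ge0 => //; apply: mulr_ge0; [lra | exact: ltW].
  have t3 : 0 < h * (5 / 4 - 3 / (2 * u)) by apply: lt_le_trans hC; lra.
  have : E <= a * (E * (1 + (2 * L - 1) * M)).
    have -> : a * (E * (1 + (2 * L - 1) * M)) = E + E * (a - 1) + a * E * ((2 * L - 1) * M) by ring.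
    lra.
  lra.
have key1 : E * ((1 - a) - a * (2 * L - 1) * M) <= 1 - a.
  have : (1 - a) * (E * expR (- M)) >= (1 - a) * (E * (1 - M)).
    by rewrite ler_pM2l ?subr_gt0 // ler_pM2l.
  rewrite hEm.
  have : 0 <= E * M * (a * (2 * L) - 1) by rewrite !mulr_ge0 // ?subr_ge0 // ltW.
  nra.
nra.
Qed.

Lemma tangent_half (R : realType) (r : R) : 0 <= r ->
  expR (-(1/2)) * (3/2 * r - 1/4) <= r * expR (r - 1).
Proof.
move=> r0.
have -> : r - 1 = -(1/2) + (r - 1/2) :> R by lra.
rewrite expRD.
have h0 : 0 < expR (-(1/2) : R) := expR_gt0 _.
have h1 : r + 1/2 <= expR (r - 1/2) by have := expR_ge1Dx (r - 1/2); lra.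
set h := expR (-(1/2)) in h0 *.
set y := expR (r - 1/2) in h1 *.
have : h * (3/2 * r - 1/4) <= h * (r * (r + 1/2)).
  rewrite ler_pM2l //; have := sqr_ge0 (r - 1/2); rewrite expr2; nra.
have : h * (r * (r + 1/2)) <= h * (r * y).
  by rewrite ler_pM2l // ler_wpM2l.
lra.
Qed.

Lemma expect_le (R : realType) (Pa Vt : finType) (K : nat)
  (q : Pa -> R) (P : 'I_K -> Pa -> Vt -> R)
  (q_ge0 : forall p, 0 <= q p) (P_ge0 : forall k p v, 0 <= P k p v)
  k (f g : Pa -> Vt -> R) :
  (forall p v, f p v <= g p v) -> expect q P k f <= expect q P k g.
Proof.
move=> H; rewrite /expect; apply: ler_sum => p _; apply: ler_sum => v _.
by apply: ler_wpM2l; [apply: mulr_ge0|].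
Qed.

Lemma expect_lin3 (R : realType) (Pa Vt : finType) (K : nat)
  (q : Pa -> R) (P : 'I_K -> Pa -> Vt -> R) k (a b d : R) (f g w : Pa -> Vt -> R) :
  expect q P k (fun p v => a * f p v + b * g p v + d * w p v) =
  a * expect q P k f + b * expect q P k g + d * expect q P k w.
Proof.
rewrite /expect !mulr_sumr -!big_split; apply: eq_bigr => p _.
rewrite !mulr_sumr -!big_split; apply: eq_bigr => v _ /=; ring.
Qed.

Lemma expect_cst1 (R : realType) (Pa Vt : finType) (K : nat)
  (q : Pa -> R) (P : 'I_K -> Pa -> Vt -> R)
  (q_sum1 : \sum_(p : Pa) q p = 1)
  (P_sum1 : forall k p, \sum_(v : Vt) P k p v = 1) k :
  expect q P k (fun _ _ => 1) = 1.
Proof.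
rewrite /expect -[RHS]q_sum1; apply: eq_bigr => p _.
under eq_bigr do rewrite mulr1.
by rewrite -mulr_sumr P_sum1 mulr1.
Qed.

Lemma expect_chg (R : realType) (Pa Vt : finType) (K : nat)
  (q : Pa -> R) (P : 'I_K -> Pa -> Vt -> R)
  (P_ac : forall k l p v, P k p v = 0 -> P l p v = 0) i j g :
  expect q P i g = expect q P j (fun p v => lratio P i j p v * g p v).
Proof.
rewrite /expect; apply: eq_bigr => p _; apply: eq_bigr => v _.
rewrite /lratio.
have [H|H] := eqVneq (P j p v) 0.
  by rewrite H (P_ac j i p v H) !(mulr0, mul0r).
by rewrite mulrA -[q p * P j p v * _]mulrA [P j p v * _]mulrC divfK.
Qed.

Theorem lemma2 (R : realType) (Pa Vt : finType) (K : nat)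
  (q : Pa -> R) (P : 'I_K -> Pa -> Vt -> R)
  (q_ge0 : forall p, 0 <= q p)
  (q_sum1 : \sum_(p : Pa) q p = 1)
  (P_ge0 : forall k p v, 0 <= P k p v)
  (P_sum1 : forall k p, \sum_(v : Vt) P k p v = 1)
  (P_ac : forall k l p v, P k p v = 0 -> P l p v = 0)
  (i j : 'I_K) (eps : R) (eps_gt0 : 0 < eps) (eps_lt2 : eps < 2) :
  eta q P i j eps <=
    ln (2 / eps) + 1 + ln (1 + cond_fdiv q P (@f1 R) i j)
  /\
  (eps <= 1 ->
   eta q P i j eps <=
     2 * ln (2 / eps) * (1 + ln (1 + cond_fdiv q P (@f1 R) i j))).
Proof.
have r0 : forall p v, 0 <= lratio P i j p v.
  by move=> p v; rewrite /lratio divr_ge0.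
have E1 := @expect_cst1 _ _ _ _ q P q_sum1 P_sum1.
have chg := @expect_chg _ _ _ _ q P P_ac i j.
have Ele := @expect_le _ _ _ _ q P q_ge0 P_ge0.
have Er : expect q P j (fun p v => lratio P i j p v) = 1.
  rewrite -(E1 i) chg; apply: eq_bigr => p _; apply: eq_bigr => v _.
  by rewrite mulr1.
pose phi p v := lratio P i j p v * expR (lratio P i j p v - 1).
have hc : 1 + cond_fdiv q P (@f1 R) i j = expect q P j phi.
  rewrite /cond_fdiv.
  have -> : (fun p v => f1 (lratio P i j p v)) =
     (fun p v => 1 * phi p v + (-1) * (fun _ _ => 1) p v + 0 * phi p v).
    by apply/funext => p; apply/funext => v; rewrite /f1 /phi; ring.
  rewrite expect_lin3 E1; ring.
rewrite hc.
set c := expect q P j phi.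
have c1 : 1 <= c.
  have : expect q P j (fun p v => 2 * lratio P i j p v + (-1) * (fun _ _ => 1) p v
        + 0 * phi p v) <= c.
    apply: Ele => p v; rewrite /phi.
    set x := lratio P i j p v.
    have x0 : 0 <= x := r0 p v.
    have : x <= expR (x - 1) by have := expR_ge1Dx (x - 1); lra.
    move=> H.
    have : x * x <= x * expR (x - 1) by rewrite ler_wpM2l.
    move=> H2; have := sqr_ge0 (x - 1); rewrite expr2; nra.
  by rewrite expect_lin3 Er E1; lra.
have c0 : 0 < c by lra.
have probE : forall B, prob q P i (fun p v => B < lratio P i j p v) =
    expect q P j (fun p v => lratio P i j p v *
      (if B < lratio P i j p v then 1 else 0)).
  by move=> B; rewrite /prob chg.
have lb : has_lbound [set e : R | prob q P i (fun p v => e < lratio P i j p v) <= eps / 2].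
  exists 0 => x /= Sx; rewrite leNgt; apply/negP => x0.
  move: Sx; rewrite /prob.
  have -> : (fun p v => if x < lratio P i j p v then 1 else 0) = (fun _ _ => (1 : R)).
    apply/funext => p; apply/funext => v.
    by rewrite (lt_le_trans x0 (r0 p v)).
  rewrite E1; lra.
have etale : forall B, prob q P i (fun p v => B < lratio P i j p v) <= eps / 2 ->
    eta q P i j eps <= B.
  by move=> B hB; rewrite /eta; apply: (ge_inf lb).
have u0 : 0 < 2 / eps by rewrite divr_gt0.
split.
  apply: etale; rewrite probE.
  set B := ln (2 / eps) + 1 + ln c.
  set X := expR (B - 1).
  have hX : X = 2 / eps * c.
    rewrite /X /B; have -> : ln (2 / eps) + 1 + ln c - 1 = ln (2 / eps) + ln c by ring.
    by rewrite expRD !lnK ?posrE.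
  have X0 : 0 < X by rewrite hX mulr_gt0.
  apply: (@le_trans _ _ (expect q P j (fun p v => X^-1 * phi p v + 0 * phi p v + 0 * phi p v))).
    apply: Ele => p v; rewrite /phi !mul0r !addr0.
    set x := lratio P i j p v.
    have x0 : 0 <= x := r0 p v.
    case: ifP => hx; last by rewrite mulr0; apply: mulr_ge0; [rewrite invr_ge0 ltW | apply: mulr_ge0 => //; exact: expR_ge0].
    rewrite mulr1 ler_pdivlMl // mulrC.
    apply: ler_wpM2l => //. rewrite /X ler_expR; lra.
  rewrite expect_lin3 hX -/c.
  have : c != 0 by rewrite lt0r_neq0.
  have : eps != 0 by rewrite lt0r_neq0.
  move=> ? ?; rewrite !mul0r !addr0; rewrite le_eqVlt; apply/orP; left; apply/eqP; field; apply/andP; split => //.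
move=> eps1.
apply: etale; rewrite probE.
set M := ln c.
have M0 : 0 <= M by rewrite /M ln_ge0.
set u := 2 / eps.
have u2 : 2 <= u by rewrite /u ler_pdivlMr //; lra.
set L := ln u.
have hL : 17 / 25 <= L.
  apply: le_trans (ln2_ge R) _.
  by rewrite /L ler_ln ?posrE //; lra.
set B := 2 * L * (1 + M).
set X := expR (B - 1).
set h := expR (-(1/2) : R).
have h0 : 0 < h by exact: expR_gt0.
have hh : h <= 2/3.
  have : h * expR (1/2) = 1.
    rewrite /h -expRD; have -> : (-(1/2) + 1/2 : R) = 0 by lra.
    exact: expR0.
  have : 1 + 1/2 <= expR (1/2 : R) := expR_ge1Dx _.
  nra.
have XB : B <= X by have := expR_ge1Dx (B - 1); rewrite /X; lra.
have B136 : 34 / 25 <= B.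
  rewrite /B; nra.
set t := expect _ _ _ _.
rewrite leNgt; apply/negP => ht.
have ct : (X - 3/2 * h) * t + 3 / 2 * h * expect q P j (fun p v => lratio P i j p v) +
     - (h / 4) * expect q P j (fun _ _ => 1) <= c.
  rewrite /t -expect_lin3.
  apply: Ele => p v; rewrite /phi.
  set x := lratio P i j p v.
  have x0 : 0 <= x := r0 p v.
  have tg := @tangent_half _ x x0.
  case: ifP => hx.
    rewrite mulr1.
    have : X <= expR (x - 1) by rewrite /X ler_expR; lra.
    move=> H.
    have : x * X <= x * expR (x - 1) by rewrite ler_wpM2l.
    lra.
  rewrite mulr0 mulr0 add0r; rewrite -/h in tg; lra.
rewrite Er E1 in ct.
have hk := @key _ u M u2 M0.
rewrite -/L -/h in hk.
have hcM : expR M = c by rewrite /M lnK ?posrE.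
rewrite hcM in hk.
have hXt : (eps / 2) * X = u / expR 1 * expR (2 * L * M).
  rewrite /X /B.
  have -> : 2 * L * (1 + M) - 1 = L + L + 2 * L * M + (- 1) by ring.
  rewrite !expRD expRN /L lnK ?posrE // /u.
  have : eps != 0 by rewrite lt0r_neq0.
  have : expR 1 != 0 :> R by rewrite lt0r_neq0 // expR_gt0.
  move=> ? ?; field; apply/andP; split => //.
have hut : (eps / 2) * (3/2 * h) = h * (3 / (2 * u)).
  rewrite /u.
  have : eps != 0 by rewrite lt0r_neq0.
  move=> ?; field; done.
have hX32 : 0 < X - 3/2 * h by lra.
have : (eps / 2) * (X - 3/2 * h) <= t * (X - 3/2 * h).
  by rewrite ler_pM2r // ltW.
nra.
Qed.
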